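(* Consider the equation $x'(t)+p(t)\,x(\tau(t))=0$, $t\ge t_0$, where $p,\tau:[t_0,\infty)\to[0,\infty)$ are continuous, $\tau(t)\le t$ and $\lim_{t\to\infty}\tau(t)=\infty$. Assume $\liminf_{t\to\infty}\int_{\tau(t)}^{t}p(s)\,ds=\beta\in(0,1/e]$ and let $\lambda^{*}$ be the smallest real root of $e^{\beta\lambda}=\lambda$. Let $\sigma:[t_0,\infty)\to\mathbb{R}$ be continuous and non-decreasing with $\tau(t)\le\sigma(t)\le t$ for $t\ge t_0$. If $$\limsup_{\varepsilon\to0+}\Bigg(\limsup_{t\to+\infty}\int_{\sigma(t)}^{t}p(s)\exp\bigg(\int_{\tau(s)}^{\sigma(t)}(\lambda^{*}-\varepsilon)\,p(\xi)\,d\xi\bigg)ds\Bigg)>1,$$ then all solutions of this equation oscillate.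
   Context: A solution is a function $x\in C([T_0,\infty);\mathbb{R})$ for some $T_0\ge t_0$, continuously differentiable on $[\tau_{(-1)}(T_0),\infty)$ where $\tau_{(-1)}(t)=\sup\{s:\tau(s)\le t\}$, satisfying the equation for $t\ge\tau_{(-1)}(T_0)$. It is oscillatory if it has arbitrarily large zeros; ''all solutions oscillate'' means every solution is oscillatory. *)

(* Defs.v *)
From Stdlib Require Import Reals Lra ClassicalEpsilon.
Open Scope R_scope.

(* Signed Riemann integral \int_a^b f (value of RiemannInt when f is
   Riemann integrable on [a,b]; an unspecified real otherwise). *)
Definition Rint (f : R -> R) (a b : R) : R :=
  epsilon (inhabits 0)
    (fun v => exists pr : Riemann_integrable f a b, RiemannInt pr = v).

Definition cont_from (a : R) (f : R -> R) : Prop :=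
  forall t, a <= t -> forall e, 0 < e -> exists d, 0 < d /\
    forall s, a <= s -> Rabs (s - t) < d -> Rabs (f s - f t) < e.

Definition has_deriv_from (a : R) (f f' : R -> R) : Prop :=
  forall t, a <= t -> forall e, 0 < e -> exists d, 0 < d /\
    forall s, a <= s -> s <> t -> Rabs (s - t) < d ->
      Rabs ((f s - f t) / (s - t) - f' t) < e.

(* x is a solution of x'(t) + p(t) x(tau(t)) = 0 (equation posed for t >= t0):
   for some T0 >= t0, x is continuous on [T0,oo), continuously differentiable
   on [T1,oo) where T1 = tau_(-1)(T0) = sup{s >= t0 : tau s <= T0},
   and satisfies the equation for t >= T1. *)
Definition is_solution (t0 : R) (p tau x : R -> R) : Prop :=
  exists T0 T1 (x' : R -> R),
    t0 <= T0 /\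
    is_lub (fun s => t0 <= s /\ tau s <= T0) T1 /\
    cont_from T0 x /\
    has_deriv_from T1 x x' /\
    cont_from T1 x' /\
    (forall t, T1 <= t -> x' t + p t * x (tau t) = 0).

Definition oscillatory (x : R -> R) : Prop :=
  forall T, exists t, T <= t /\ x t = 0.

Definition liminf_infty_eq (f : R -> R) (b : R) : Prop :=
  forall e, 0 < e ->
    (exists T, forall t, T <= t -> b - e < f t) /\
    (forall T, exists t, T <= t /\ f t < b + e).

(* limsup_{t -> +oo} f t > c  (limsup taken in the extended reals). *)
Definition limsup_infty_gt (f : R -> R) (c : R) : Prop :=
  exists c', c < c' /\ forall T, exists t, T <= t /\ c' < f t.

(* limsup_{e -> 0+} L(e) > c, where "L(e) > c'" is given by the predicate
   Lgt e c' (L possibly extended-real valued). *)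
Definition limsup_0plus_gt (Lgt : R -> R -> Prop) (c : R) : Prop :=
  exists c', c < c' /\ forall d, 0 < d -> exists e, 0 < e < d /\ Lgt e c'.

(* Main.v *)
Require Import Defs.
From Stdlib Require Import Reals Lra ClassicalEpsilon Classical.
From Coquelicot Require Import Coquelicot.
Open Scope R_scope.

Lemma cont_pt a f t : a < t -> cont_from a f -> continuous f t.
Proof.
  intros Ht Hc. apply continuity_pt_filterlim.
  intros eps Heps. destruct (Hc t (Rlt_le _ _ Ht) eps Heps) as [d [Hd Hd2]].
  exists (Rmin d (t - a)). split.
  - apply Rmin_pos; lra.
  - intros y [_ Hy]. simpl in *. unfold R_dist in *.
    assert (Hm1 := Rmin_l d (t-a)). assert (Hm2 := Rmin_r d (t-a)).
    apply Hd2; [|lra].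
    destruct (Rcase_abs (y - t)) as [Hn|Hn];
      [rewrite Rabs_left in Hy by lra | rewrite Rabs_right in Hy by lra]; lra.
Qed.

Lemma deriv_pt a f f' t : a < t -> has_deriv_from a f f' -> is_derive f t (f' t).
Proof.
  intros Ht Hd. apply is_derive_Reals. intros eps Heps.
  destruct (Hd t (Rlt_le _ _ Ht) eps Heps) as [d [Hd0 Hd2]].
  assert (Hp : 0 < Rmin d (t - a)) by (apply Rmin_pos; lra).
  exists (mkposreal _ Hp). intros h Hh Hh2. simpl in Hh2.
  assert (Hm1 := Rmin_l d (t-a)). assert (Hm2 := Rmin_r d (t-a)).
  assert (E : t + h - t = h) by ring.
  specialize (Hd2 (t + h)). rewrite E in Hd2. apply Hd2; try lra.
  destruct (Rcase_abs h) as [Hn|Hn];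
      [rewrite Rabs_left in Hh2 by lra | rewrite Rabs_right in Hh2 by lra]; lra.
Qed.

Lemma Rint_RInt f a b : (forall z, Rmin a b <= z <= Rmax a b -> continuous f z) ->
  Rint f a b = RInt f a b.
Proof.
  intros Hc. assert (He := ex_RInt_continuous f a b Hc).
  assert (Hr := ex_RInt_Reals_0 _ _ _ He).
  unfold Rint.
  destruct (epsilon_spec (inhabits 0) (fun v => exists pr : Riemann_integrable f a b, RiemannInt pr = v)) as [pr Hpr].
  { exists (RiemannInt Hr). exists Hr. reflexivity. }
  rewrite <- Hpr. symmetry. apply RInt_Reals.
Qed.

Lemma exp_le' a b : a <= b -> exp a <= exp b.
Proof. intros H; destruct (Rle_lt_or_eq_dec _ _ H) as [H1|H1];
  [left; apply exp_increasing; auto | subst; lra]. Qed.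

Section S.
Variables (t0 : R) (p tau sigma : R -> R) (beta lam : R) (x x' : R -> R) (A : R).
Hypothesis Hpc : forall s, t0 < s -> continuous p s.
Hypothesis Htc : forall s, t0 < s -> continuous tau s.
Hypothesis Hp_nonneg : forall t, t0 <= t -> 0 <= p t.
Hypothesis Htau_le : forall t, t0 <= t -> tau t <= t.
Hypothesis Htau_lim : forall M, exists T, forall t, T <= t -> M < tau t.
Hypothesis HA : t0 < A.
Hypothesis Hxc : forall s, A <= s -> continuous x s.
Hypothesis Hxd : forall s, A <= s -> is_derive x s (x' s).
Hypothesis Hx'c : forall s, A <= s -> continuous x' s.
Hypothesis Heq : forall s, A <= s -> x' s + p s * x (tau s) = 0.
Hypothesis Hpos : forall s, A <= s -> 0 < x s.

Definition w u := x (tau u) / x u.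

Lemma M_ex : exists M, A <= M /\ forall s, M <= s -> A < tau s.
Proof.
  destruct (Htau_lim A) as [T HT]. exists (Rmax T A). split. apply Rmax_r.
  intros s Hs. apply HT. assert (H := Rmax_l T A). lra.
Qed.

Section M.
Variable M : R.
Hypothesis HM : A <= M.
Hypothesis HMt : forall s, M <= s -> A < tau s.

Lemma Cxt s : M <= s -> continuous (fun u => x (tau u)) s.
Proof.
  intros Hs. apply (continuous_comp tau x). apply Htc; lra.
  apply Hxc. specialize (HMt s Hs). lra.
Qed.

Lemma Cw s : M <= s -> continuous w s.
Proof.
  intros Hs. unfold w. apply (continuous_mult (fun u => x (tau u)) (fun u => / x u)).
  apply Cxt; auto. apply continuous_Rinv_comp. apply Hxc; lra.
  apply Rgt_not_eq, Hpos; lra.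
Qed.

Lemma Cpx s : M <= s -> continuous (fun u => p u * x (tau u)) s.
Proof.
  intros Hs. apply (continuous_mult p (fun u => x (tau u))). apply Hpc; lra.
  apply Cxt; auto.
Qed.

Lemma Cpw s : M <= s -> continuous (fun u => p u * w u) s.
Proof.
  intros Hs. apply (continuous_mult p w). apply Hpc; lra.
  apply Cw; auto.
Qed.

Lemma FTC1 a b : M <= a <= b -> RInt (fun u => p u * x (tau u)) a b = x a - x b.
Proof.
  intros Hab.
  assert (H := is_RInt_derive (fun u => - x u) (fun u => p u * x (tau u)) a b).
  rewrite Rmin_left, Rmax_right in H by lra.
  apply is_RInt_unique in H.
  - rewrite H. unfold minus, plus, opp; simpl. ring.
  - intros u Hu. replace (p u * x (tau u)) with (opp (x' u)).
    apply (is_derive_opp x). apply Hxd; lra.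
    unfold opp; simpl. specialize (Heq u ltac:(lra)). lra.
  - intros u Hu. apply Cpx; lra.
Qed.

Lemma FTC2 a b : M <= a <= b -> RInt (fun u => p u * w u) a b = ln (x a) - ln (x b).
Proof.
  intros Hab.
  assert (H := is_RInt_derive (fun u => - ln (x u)) (fun u => p u * w u) a b).
  rewrite Rmin_left, Rmax_right in H by lra.
  apply is_RInt_unique in H.
  - rewrite H. unfold minus, plus, opp; simpl. ring.
  - intros u Hu. replace (p u * w u) with (opp (scal (x' u) (/ x u))).
    apply (is_derive_opp (fun u => ln (x u))).
    apply (is_derive_comp ln x). apply is_derive_ln, Hpos; lra. apply Hxd; lra.
    unfold opp, scal; simpl. unfold mult; simpl. unfold w.
    specialize (Heq u ltac:(lra)). replace (x' u) with (- (p u * x (tau u))) by lra.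
    field. apply Rgt_not_eq, Hpos; lra.
  - intros u Hu. apply Cpw; lra.
Qed.

Lemma x_mono a b : M <= a <= b -> x b <= x a.
Proof.
  intros Hab. assert (H := FTC1 a b Hab).
  assert (0 <= RInt (fun u => p u * x (tau u)) a b).
  { apply RInt_ge_0. lra. apply (ex_RInt_continuous (V:=R_CompleteNormedModule)). rewrite Rmin_left, Rmax_right by lra.
    intros; apply Cpx; lra.
    intros u Hu. apply Rmult_le_pos. apply Hp_nonneg; lra.
    left; apply Hpos. specialize (HMt u ltac:(lra)). lra. }
  lra.
Qed.

Lemma xexp a b : M <= a <= b -> x a = x b * exp (RInt (fun u => p u * w u) a b).
Proof.
  intros Hab. rewrite (FTC2 a b Hab). unfold Rminus. rewrite exp_plus, exp_Ropp, !exp_ln.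
  field. apply Rgt_not_eq, Hpos; lra. apply Hpos; lra. apply Hpos; lra.
Qed.

Lemma w_exp t : M <= tau t -> t0 <= t -> w t = exp (RInt (fun u => p u * w u) (tau t) t).
Proof.
  intros H1 H2. assert (tau t <= t) by (apply Htau_le; auto).
  unfold w at 1. rewrite (xexp (tau t) t) by lra. field. apply Rgt_not_eq, Hpos; lra.
Qed.

Lemma w_ge1 t : M <= tau t -> t0 <= t -> 1 <= w t.
Proof.
  intros H1 H2. assert (tau t <= t) by (apply Htau_le; auto).
  assert (Hm := x_mono (tau t) t ltac:(lra)). unfold w.
  assert (0 < x t) by (apply Hpos; lra).
  apply (Rmult_le_reg_r (x t)); auto. field_simplify; lra.
Qed.

Definition ev l := exists T, forall t, T <= t -> l <= w t.

Lemma ev_mono l l' : l' <= l -> ev l -> ev l'.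
Proof. intros H [T HT]; exists T; intros t Ht; specialize (HT t Ht); lra. Qed.

Lemma ev1 : ev 1.
Proof.
  destruct (Htau_lim M) as [N HN]. exists (Rmax N M). intros t Ht.
  assert (H1 := Rmax_l N M). assert (H2 := Rmax_r N M).
  apply w_ge1. left; apply HN; lra. lra.
Qed.

Lemma ex_cont (f : R -> R) a b : (forall z, a <= z <= b -> continuous f z) -> a <= b -> ex_RInt f a b.
Proof.
  intros H Hab. apply (ex_RInt_continuous (V:=R_CompleteNormedModule)).
  rewrite Rmin_left, Rmax_right by lra. auto.
Qed.

Hypothesis Hbeta : liminf_infty_eq (fun t => Rint p (tau t) t) beta.
Hypothesis Hbpos : 0 < beta.
Hypothesis Hlam_min : forall l, exp (beta * l) = l -> lam <= l.

Lemma step l d : 0 <= l -> ev l -> 0 < d -> ev (exp (l * (beta - d))).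
Proof.
  intros Hl [Tl HTl] Hd.
  destruct (Hbeta d Hd) as [[Tb HTb] _]. destruct (Htau_lim (Rmax M Tl)) as [N HN].
  exists (Rmax (Rmax N Tb) M). intros t Ht.
  assert (H1 := Rmax_l N Tb). assert (H2 := Rmax_r N Tb).
  assert (H3 := Rmax_l (Rmax N Tb) M). assert (H4 := Rmax_r (Rmax N Tb) M).
  assert (H5 := HN t ltac:(lra)).
  assert (H6 := Rmax_l M Tl). assert (H7 := Rmax_r M Tl).
  assert (Ht0 : t0 <= t) by lra.
  assert (Htt := Htau_le t Ht0).
  specialize (HTb t ltac:(lra)). simpl in HTb.
  rewrite Rint_RInt in HTb.
  2:{ rewrite Rmin_left, Rmax_right by lra. intros z Hz; apply Hpc; lra. }
  rewrite w_exp by lra. apply exp_le'.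
  assert (Ep : ex_RInt p (tau t) t) by (apply ex_cont; [intros z Hz; apply Hpc; lra| lra]).
  assert (E := RInt_scal p (tau t) t l Ep). unfold scal in E; simpl in E; unfold mult in E; simpl in E.
  apply Rle_trans with (RInt (fun u => l * p u) (tau t) t).
  - rewrite E. apply Rmult_le_compat_l; lra.
  - apply RInt_le. lra.
    apply ex_cont; [intros z Hz| lra].
    apply (continuous_mult (fun _ => l) p). apply continuous_const. apply Hpc; lra.
    apply ex_cont; [intros z Hz; apply Cpw; lra| lra].
    intros u Hu. assert (l <= w u) by (apply HTl; lra).
    assert (0 <= p u) by (apply Hp_nonneg; lra). nra.
Qed.

Lemma evlam e : 0 < e -> ev (lam - e).
Proof.
  intros He.
  destruct (classic (exists B, forall l, 0 <= l -> ev l -> l <= B)) as [[B HB]|Hnb].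
  - set (E := fun l => 0 <= l /\ ev l).
    destruct (completeness E) as [L [HL1 HL2]].
    { exists B. intros l [Hl1 Hl2]. auto. }
    { exists 1. split. lra. apply ev1. }
    assert (L1 : 1 <= L) by (apply HL1; split; [lra|apply ev1]).
    assert (Hexp : exp (beta * L) <= L).
    { apply Rnot_lt_le. intros Hlt.
      assert (Hg : ln L < beta * L).
      { rewrite <- (ln_exp (beta * L)). apply ln_increasing; lra. }
      set (g := beta * L - ln L).
      set (gam := g / (2 * (L + beta))).
      assert (Hgam : gam * (L + beta) = g / 2) by (unfold gam; field; lra).
      assert (Hgp : 0 < gam) by (unfold gam; apply Rdiv_lt_0_compat; unfold g; lra).
      set (d := Rmin gam beta).
      assert (Hd1 : d <= gam) by apply Rmin_l. assert (Hd2 : d <= beta) by apply Rmin_r.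
      assert (Hd0 : 0 < d) by (apply Rmin_pos; lra).
      destruct (classic (exists l, E l /\ L - gam < l)) as [[l [[El1 El2] Hl]]|Hn].
      + assert (Hs := step l d El1 El2 Hd0).
        assert (Hle : exp (l * (beta - d)) <= L).
        { apply HL1. split. left; apply exp_pos. auto. }
        assert (Hk : l * (beta - d) > ln L).
        { assert ((l - (L - gam)) * (beta - d) >= 0) by (apply Rle_ge, Rmult_le_pos; lra).
          assert (L * d <= L * gam) by (apply Rmult_le_compat_l; lra).
          assert (0 <= gam * d) by (apply Rmult_le_pos; lra).
          unfold g in Hgam. nra. }
        assert (exp (ln L) < exp (l * (beta - d))) by (apply exp_increasing; lra).
        rewrite exp_ln in H by lra. lra.
      + assert (L <= L - gam); [|lra].
        apply HL2. intros l El. destruct (Rle_or_lt l (L - gam)); auto.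
        exfalso; apply Hn; exists l; auto. }
    assert (HlL : lam <= L).
    { destruct (IVT_cor (fun y => exp (beta * y) - y) 0 L) as [z [Hz1 Hz2]].
      - intros y. reg.
      - lra.
      - rewrite Rmult_0_r, exp_0. lra.
      - assert (lam <= z) by (apply Hlam_min; lra). lra. }
    destruct (classic (exists l, E l /\ lam - e < l)) as [[l [[El1 El2] Hl]]|Hn].
    + apply ev_mono with l; auto; lra.
    + assert (L <= lam - e); [|lra].
      apply HL2. intros l El. destruct (Rle_or_lt l (lam - e)); auto.
      exfalso; apply Hn; exists l; auto.
  - apply NNPP; intros Hn. apply Hnb. exists (lam - e). intros l Hl Hev.
    destruct (Rle_or_lt l (lam - e)); auto. exfalso; apply Hn.
    apply ev_mono with l; auto; lra.
Qed.

Hypothesis Hsigma_mono : forall s t, t0 <= s -> s <= t -> sigma s <= sigma t.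
Hypothesis Hsigma_bounds : forall t, t0 <= t -> tau t <= sigma t <= t.
Hypothesis Hcond : limsup_0plus_gt
     (fun eps c => limsup_infty_gt
        (fun t => Rint (fun s => p s *
             exp (Rint (fun xi => (lam - eps) * p xi) (tau s) (sigma t)))
           (sigma t) t) c)
     1.

Lemma final : False.
Proof.
  destruct Hcond as [c1 [Hc1 Hc]]. destruct (Hc 1 Rlt_0_1) as [e [[He0 He1] [c2 [Hc2 Hlim]]]].
  destruct (evlam e He0) as [Te HTe].
  destruct (Htau_lim (Rmax M Te)) as [N1 HN1].
  destruct (Htau_lim (Rmax N1 M + 1)) as [N2 HN2]. assert (Q5 := Rmax_l N1 M). assert (Q6 := Rmax_r N1 M).
  destruct (Hlim (Rmax N2 M)) as [t [Ht HF]].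
  assert (Q1 := Rmax_l N2 M). assert (Q2 := Rmax_r N2 M).
  assert (Q3 := Rmax_l M Te). assert (Q4 := Rmax_r M Te).
  assert (Ht0 : t0 <= t) by lra.
  assert (Htt := HN2 t ltac:(lra)).
  destruct (Hsigma_bounds t Ht0) as [Hs1 Hs2].
  set (c := sigma t) in *.
  set (h := fun xi => (lam - e) * p xi) in *.
  assert (Ch : forall z, M <= z -> continuous h z).
  { intros z Hz. apply (continuous_mult (fun _ => lam - e) p). apply continuous_const. apply Hpc; lra. }
  assert (K1 : forall s, c <= s <= t -> tau s <= c).
  { intros s Hs. assert (t0 <= s) by lra. destruct (Hsigma_bounds s H) as [H1 H2].
    assert (sigma s <= sigma t) by (apply Hsigma_mono; lra). unfold c; lra. }
  assert (K2 : forall s, N1 <= s -> tau s <= c -> c * 0 = 0 /\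
     x c * exp (Rint h (tau s) c) <= x (tau s)).
  { intros s Hs Hsc. split. ring. specialize (HN1 s Hs).
    rewrite Rint_RInt.
    2:{ rewrite Rmin_left, Rmax_right by lra. intros z Hz; apply Ch; lra. }
    rewrite (xexp (tau s) c) by lra.
    apply Rmult_le_compat_l. left; apply Hpos; lra.
    apply exp_le'. apply RInt_le. lra.
    apply ex_cont; [intros z Hz; apply Ch; lra| lra].
    apply ex_cont; [intros z Hz; apply Cpw; lra| lra].
    intros u Hu. unfold h. assert (lam - e <= w u) by (apply HTe; lra).
    assert (0 <= p u) by (apply Hp_nonneg; lra). nra. }
  set (g := fun s => p s * exp (Rint h (tau s) c)) in *.
  assert (K3 : forall s, c <= s <= t -> continuous g s).
  { intros s Hs.
    apply (continuous_ext_loc g (fun u => p u * exp (RInt h M c - RInt h M (tau u)))).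
    - apply (locally_interval _ s N1 p_infty). simpl; lra. simpl; auto.
      intros u Hu _. simpl in Hu. specialize (HN1 u ltac:(lra)). unfold g.
      f_equal. f_equal. rewrite Rint_RInt.
      2:{ intros z [Hz1 Hz2]. apply Ch.
          assert (Hm := Rmin_glb (tau u) c M ltac:(lra) ltac:(lra)). lra. }
      assert (E := RInt_Chasles h M (tau u) c).
      unfold plus in E; simpl in E. rewrite <- E. ring.
      apply (ex_RInt_continuous (V:=R_CompleteNormedModule)). intros z [Hz1 Hz2]. apply Ch.
      assert (Hm := Rmin_glb M (tau u) M ltac:(lra) ltac:(lra)). lra.
      apply (ex_RInt_continuous (V:=R_CompleteNormedModule)). intros z [Hz1 Hz2]. apply Ch.
      assert (Hm := Rmin_glb (tau u) c M ltac:(lra) ltac:(lra)). lra.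
    - specialize (HN1 s ltac:(lra)).
      apply (continuous_mult p (fun u => exp (RInt h M c - RInt h M (tau u)))).
      apply Hpc; lra. apply continuous_exp_comp.
      apply (continuous_minus (fun _ => RInt h M c) (fun u => RInt h M (tau u))).
      apply continuous_const.
      apply (continuous_comp tau (RInt h M)). apply Htc; lra.
      apply (ex_derive_continuous (K:=R_AbsRing) (V:=R_NormedModule) (fun b : R => RInt h M b)). exists (h (tau s)).
      apply (is_derive_RInt (V:=R_NormedModule) h (fun b : R => RInt h M b) M).
      + apply (locally_interval _ (tau s) M p_infty). simpl; lra. simpl; auto.
        intros b Hb _. simpl in Hb. apply (RInt_correct (V:=R_CompleteNormedModule)).
        apply ex_cont; [intros z Hz; apply Ch; lra| lra].
      + apply Ch; lra. }
  assert (K4 : Rint g c t = RInt g c t).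
  { apply Rint_RInt. rewrite Rmin_left, Rmax_right by lra. auto. }
  simpl in HF. fold c in HF. fold h in HF. fold g in HF. rewrite K4 in HF.
  assert (K5 := FTC1 c t ltac:(lra)).
  assert (Eg : ex_RInt g c t) by (apply ex_cont; auto; lra).
  assert (E := RInt_scal g c t (x c) Eg). unfold scal in E; simpl in E; unfold mult in E; simpl in E.
  assert (K6 : RInt (fun s => x c * g s) c t <= RInt (fun u => p u * x (tau u)) c t).
  { apply RInt_le. lra.
    apply ex_cont; [intros z Hz| lra].
    apply (continuous_mult (fun _ => x c) g). apply continuous_const. apply K3; lra.
    apply ex_cont; [intros z Hz; apply Cpx; lra| lra].
    intros u Hu. unfold g.
    destruct (K2 u ltac:(lra) (K1 u ltac:(lra))) as [_ Hk].
    assert (0 <= p u) by (apply Hp_nonneg; lra). nra. }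
  rewrite E, K5 in K6.
  assert (0 < x t) by (apply Hpos; lra). assert (0 < x c) by (apply Hpos; lra).
  assert (x c * RInt g c t < x c * 1) by lra.
  apply Rmult_lt_reg_l in H1; lra.
Qed.

End M.
End S.

Theorem corollary3p2
  (t0 : R) (p tau sigma : R -> R) (beta lam : R)
  (Hp_cont : cont_from t0 p) (Htau_cont : cont_from t0 tau)
  (Hp_nonneg : forall t, t0 <= t -> 0 <= p t)
  (Htau_nonneg : forall t, t0 <= t -> 0 <= tau t)
  (Htau_le : forall t, t0 <= t -> tau t <= t)
  (Htau_lim : forall M, exists T, forall t, T <= t -> M < tau t)
  (Hbeta : liminf_infty_eq (fun t => Rint p (tau t) t) beta)
  (Hbeta_range : 0 < beta <= exp (-1))
  (Hlam_root : exp (beta * lam) = lam)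
  (Hlam_min : forall l, exp (beta * l) = l -> lam <= l)
  (Hsigma_cont : cont_from t0 sigma)
  (Hsigma_mono : forall s t, t0 <= s -> s <= t -> sigma s <= sigma t)
  (Hsigma_bounds : forall t, t0 <= t -> tau t <= sigma t <= t)
  (Hcond : limsup_0plus_gt
     (fun eps c => limsup_infty_gt
        (fun t => Rint (fun s => p s *
             exp (Rint (fun xi => (lam - eps) * p xi) (tau s) (sigma t)))
           (sigma t) t) c)
     1) :
  forall x : R -> R, is_solution t0 p tau x -> oscillatory x.
Proof.
  intros x [T0 [T1 [x' [HT0 [Hlub [Hxc [Hxd [Hx'c Heqn]]]]]]]].
  unfold oscillatory. apply NNPP; intro Hno.
  destruct (not_all_ex_not _ _ Hno) as [T HT].
  assert (HT' : forall t, T <= t -> x t <> 0).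
  { intros t Ht Hx. apply HT. exists t. auto. }
  assert (HT1 : T0 <= T1).
  { apply (proj1 Hlub). split; auto. }
  set (A := Rmax (Rmax T T1) t0 + 1).
  assert (Q1 := Rmax_l (Rmax T T1) t0). assert (Q2 := Rmax_r (Rmax T T1) t0).
  assert (Q3 := Rmax_l T T1). assert (Q4 := Rmax_r T T1).
  assert (Hpc : forall s, t0 < s -> continuous p s) by (intros; eapply cont_pt; eauto).
  assert (Htc : forall s, t0 < s -> continuous tau s) by (intros; eapply cont_pt; eauto).
  assert (Hxc' : forall s, A <= s -> continuous x s).
  { intros s Hs. apply (cont_pt T0); auto. unfold A in Hs; lra. }
  assert (Hxd' : forall s, A <= s -> is_derive x s (x' s)).
  { intros s Hs. apply (deriv_pt T1); auto. unfold A in Hs; lra. }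
  assert (Heq' : forall s, A <= s -> x' s + p s * x (tau s) = 0).
  { intros s Hs. apply Heqn. unfold A in Hs; lra. }
  assert (HA : t0 < A) by (unfold A; lra).
  destruct (M_ex tau A Htau_lim) as [M [HM HMt]].
  assert (HxA : x A <> 0) by (apply HT'; unfold A; lra).
  destruct (Rdichotomy _ _ HxA) as [Hneg|HposA].
  -
    assert (Hpos : forall s, A <= s -> 0 < - x s).
    { intros s Hs. destruct (Rle_lt_or_eq_dec _ _ Hs) as [Hs'|Hs'].
      - destruct (Rlt_or_le (x s) 0) as [H|H]; [lra|].
        assert (Hxs : x s <> 0) by (apply HT'; unfold A in Hs; lra).
        destruct (Ranalysis5.IVT_interv x A s) as [z [Hz1 Hz2]]; auto; try lra.
        + intros a Ha. apply continuity_pt_filterlim. apply Hxc'; lra.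
        + exfalso. apply (HT' z); auto. unfold A in Hz1; lra.
      - subst s. lra. }
    refine (final t0 p tau sigma beta lam (fun u => - x u) (fun u => - x' u) A
      Hpc Htc Hp_nonneg Htau_le Htau_lim HA _ _ _ Hpos M HM HMt Hbeta _ Hlam_min Hsigma_mono Hsigma_bounds Hcond).
    + intros s Hs. apply (continuous_opp x). auto.
    + intros s Hs. apply (is_derive_opp x). auto.
    + intros s Hs. specialize (Heq' s Hs). lra.
    + lra.
  - assert (Hpos : forall s, A <= s -> 0 < x s).
    { intros s Hs. destruct (Rle_lt_or_eq_dec _ _ Hs) as [Hs'|Hs'].
      - destruct (Rlt_or_le 0 (x s)) as [H|H]; [lra|].
        assert (Hxs : x s <> 0) by (apply HT'; unfold A in Hs; lra).
        destruct (Ranalysis5.IVT_interv (fun u => - x u) A s) as [z [Hz1 Hz2]]; auto; try lra.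
        + intros a Ha. apply continuity_pt_filterlim. apply (continuous_opp x). apply Hxc'; lra.
        + exfalso. apply (HT' z); [unfold A in Hz1; lra | lra].
      - subst s. lra. }
    apply (final t0 p tau sigma beta lam x x' A
      Hpc Htc Hp_nonneg Htau_le Htau_lim HA Hxc' Hxd' Heq' Hpos M HM HMt); auto.
    lra.
Qed.
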